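(* Let $W$ be the Witt algebra with basis $\{x_n\mid n\in\mathbb{Z}\}$ and bracket $[x_m,x_n]=(n-m)x_{m+n}$, and let $V$ be a left-symmetric algebra structure on the underlying space of $W$ with product $x_mx_n=f(m,n)x_{m+n}$ for some $f:\mathbb{Z}\times\mathbb{Z}\to\mathbb{C}$ and with $x_mx_n-x_nx_m=(n-m)x_{m+n}$. Then $V$, regarded as a $W$-module via left multiplication, is indecomposable, i.e. it is not a direct sum of two proper submodules.
   Context: A left-symmetric algebra is a vector space with bilinear product satisfying $(xy)z-x(yz)=(yx)z-y(xz)$; left multiplication gives a representation of the commutator Lie algebra. *)

(* Defs.v *)
From HB Require Import structures.
From mathcomp Require Import all_boot all_order all_algebra.
From mathcomp Require Import reals.
From mathcomp Require Import complex.
Set Implicit Arguments. Unset Strict Implicit. Unset Printing Implicit Defensive.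
Import Order.TTheory GRing.Theory Num.Theory.
Local Open Scope ring_scope.

(* A vector of V (= underlying space of the Witt algebra, basis x_n, n in Z) *)
(* is represented by its coordinate function int -> C, with finite support. *)

Definition finsupp (K : Type) (zero : K) (v : int -> K) : Prop :=
  exists s : seq int, forall n, n \notin s -> v n = zero.

Section Witt.
Variable R : realType.
Local Notation C := (R[i]).

(* (x_m x_n) x_p - x_m (x_n x_p) = (x_n x_m) x_p - x_n (x_m x_p).            *)
Definition left_symmetric (f : int -> int -> C) : Prop :=
  forall m n p : int,
    f m n * f (m + n) p - f n p * f m (n + p) =
    f n m * f (n + m) p - f m p * f n (m + p).

Definition witt_commutator (f : int -> int -> C) : Prop :=
  forall m n : int, f m n - f n m = (n - m)%:~R.

(* x_m v = sum_k v_k f(m,k) x_{m+k}, i.e. coordinate j is f(m,j-m) v_{j-m}.  *)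
Definition lmul (f : int -> int -> C) (m : int) (v : int -> C) : int -> C :=
  fun j => f m (j - m) * v (j - m).

Definition submodule (f : int -> int -> C) (U : (int -> C) -> Prop) : Prop :=
  [/\ (forall v, U v -> finsupp 0 v),
      U (fun _ => 0),
      (forall (a : C) u v, U u -> U v -> U (fun k => a * u k + v k)) &
      (forall m v, U v -> U (lmul f m v))].

Definition proper_sub (U : (int -> C) -> Prop) : Prop :=
  exists v, finsupp 0 v /\ ~ U v.

Definition direct_sum (U1 U2 : (int -> C) -> Prop) : Prop :=
  (forall v, U1 v -> U2 v -> v = (fun _ => 0)) /\
  (forall v, finsupp 0 v ->
     exists v1 v2, [/\ U1 v1, U2 v2 & v = (fun k => v1 k + v2 k)]).

Definition indecomposable (f : int -> int -> C) : Prop :=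
  ~ exists U1 U2, [/\ submodule f U1, submodule f U2,
                      proper_sub U1, proper_sub U2 & direct_sum U1 U2].
End Witt.

(* Main.v *)
Require Import Defs.
From HB Require Import structures.
From mathcomp Require Import all_boot all_order all_algebra.
From mathcomp Require Import reals.
From mathcomp Require Import complex.
From mathcomp Require Import zify ring.
From Stdlib Require Import Classical FunctionalExtensionality.
Import GRing.Theory Num.Theory.
Local Open Scope ring_scope.

Ltac cast := rewrite ?intrD ?intrN ?intrB; ring.

Lemma Rv {R : realType} {f : int -> int -> R[i]} : left_symmetric f -> witt_commutator f ->
  forall m n p q r s (N A B Cc D E : R[i]), q = m + n -> r = n + p -> s = m + p ->
  (n - m)%:~R = N -> f n p = A -> f m r = B -> f m p = Cc -> f n s = D -> f q p = E ->
  N * E = A * B - Cc * D.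
Proof.
move=> LS WC m n p q r s N A B Cc D E -> -> -> <- <- <- <- <- <-.
rewrite -(WC m n). have := LS m n p. rewrite (addrC n m) => h.
apply/eqP; rewrite -subr_eq0; apply/eqP. move/eqP: h; rewrite -subr_eq0 => /eqP h.
rewrite -h. ring.
Qed.

Lemma Cv {R : realType} {f : int -> int -> R[i]} : witt_commutator f ->
  forall m n (N A : R[i]), (n - m)%:~R = N -> f n m = A -> f m n = A + N.
Proof. move=> WC m n N A <- <-; rewrite -(WC m n); ring. Qed.

Lemma lin1 {R : realType} (c x y z : R[i]) : x = y -> z = c * (x - y) -> z = 0.
Proof. by move=> -> ->; rewrite subrr mulr0. Qed.

Lemma lin2 {R : realType} (c1 c2 x1 y1 x2 y2 z : R[i]) : x1 = y1 -> x2 = y2 ->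
  z = c1 * (x1 - y1) + c2 * (x2 - y2) -> z = 0.
Proof. by move=> -> -> ->; rewrite !subrr !mulr0 addr0. Qed.

Lemma lin3 {R : realType} (c1 c2 c3 x1 y1 x2 y2 x3 y3 z : R[i]) : x1 = y1 -> x2 = y2 ->
  x3 = y3 -> z = c1 * (x1 - y1) + c2 * (x2 - y2) + c3 * (x3 - y3) -> z = 0.
Proof. by move=> -> -> -> ->; rewrite !subrr !mulr0 !addr0. Qed.

Lemma nz (R : realType) (z : int) : z != 0 -> (z%:~R : R[i]) != 0.
Proof. by rewrite intr_eq0. Qed.

Lemma G {R : realType} {f : int -> int -> R[i]} : left_symmetric f -> witt_commutator f ->
  forall Q : int -> Prop, Q 0 -> (forall j, Q j -> f 0 j = j%:~R + f 0 0) ->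
  (forall m j, f m j != 0 -> (Q (m + j) <-> Q j)) -> forall k, Q k.
Proof.
move=> LS WC Q Q0 HQ0 HQ.
have Z1 : forall m j p, p = m + j -> Q p -> ~ Q j -> f m j = 0.
  move=> m j p -> Hp Hj; case: (eqVneq (f m j) 0) => // /HQ h.
  by exfalso; apply: Hj; apply h.
have Z2 : forall m j p, p = m + j -> ~ Q p -> Q j -> f m j = 0.
  move=> m j p -> Hp Hj; case: (eqVneq (f m j) 0) => // /HQ h.
  by exfalso; apply: Hp; apply h.
have Cl : forall m j p, p = m + j -> f m j != 0 -> (Q p <-> Q j).
  by move=> m j p ->; exact: HQ.
have knz : forall k, ~ Q k -> k != 0.
  by move=> k nQ; apply/eqP => k0; apply: nQ; rewrite k0.
have basic : forall k, ~ Q k -> [/\ f (-k) k = 0, f k (-k) = (-k - k)%:~R, Q (-k),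
      f (k + k) (-k) = 0 & ~ Q (k + k)].
  move=> k nQ; have kn := knz k nQ.
  have h1 : f (-k) k = 0 := Z1 (-k) k 0 ltac:(lia) Q0 nQ.
  have h2 : f k (-k) = (-k - k)%:~R.
    by rewrite (Cv WC k (-k) (-k - k)%:~R 0 erefl h1) add0r.
  have h3 : Q (-k).
    have hf : f k (-k) != 0 by rewrite h2; apply: nz; lia.
    exact: (proj1 (Cl k (-k) 0 ltac:(lia) hf) Q0).
  have h4 : f (k + k) (-k) = 0 := Z2 (k + k) (-k) k ltac:(lia) nQ h3.
  split => // Qkk.
  have h5 : f (-k) (k + k) = 0 + ((k + k) - - k)%:~R.
    by apply: (Cv WC).
  have hf : f (-k) (k + k) != 0 by rewrite h5 add0r; apply: nz; lia.
  exact: (nQ (proj2 (Cl (-k) (k + k) k ltac:(lia) hf) Qkk)).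
have key : forall k, ~ Q k -> (k + k)%:~R * (8 * f 0 0 + 5 * k%:~R) = 0.
  move=> k nQ; have kn := knz k nQ.
  have [h1 h2 h3 h4 h5] := basic k nQ.
  have [g1 g2 g3 g4 g5] := basic (k + k) h5.
  have e9 := Rv LS WC (-k) k 0 0 k (-k) ((k - - k)%:~R) (f k 0)
     (0) (f (-k) 0) ((-k - k)%:~R) (f 0 0)
     ltac:(lia) ltac:(lia) ltac:(lia) erefl erefl h1 erefl h2 erefl.
  have e10 := Rv LS WC (k + k) (-k) (-k) k (-(k + k)) k ((-k - (k + k))%:~R)
     (f (-k) (-k)) ((- (k + k) - (k + k))%:~R) (0) (0)
     ((-k - k)%:~R)
     ltac:(lia) ltac:(lia) ltac:(lia) erefl erefl g2 h4 h1 h2.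
  have z1 : f (-k - k) k = 0 := Z1 (-k - k) k (-k) ltac:(lia) h3 nQ.
  have c1 : f k (-k - k) = 0 + ((-k - k) - k)%:~R by apply: (Cv WC).
  have q1 : f 0 (-k) = (-k)%:~R + f 0 0 := HQ0 _ h3.
  have e11 := Rv LS WC (-k) k (-k) 0 0 (-k - k) ((k - - k)%:~R)
     ((-k - k)%:~R) (f (-k) 0) (f (-k) (-k))
     (0 + ((-k - k) - k)%:~R) ((-k)%:~R + f 0 0)
     ltac:(lia) ltac:(lia) ltac:(lia) erefl h2 erefl erefl c1 q1.
  apply: (lin3 4 3 4 _ _ _ _ _ _ _ e9 e10 e11).
  cast.
move=> k; apply: NNPP => nQ.
have [h1 h2 h3 h4 h5] := basic k nQ.
have kn := knz k nQ.
have k1 := key k nQ; have k2 := key (k + k) h5.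
have e1 : 8 * f 0 0 + 5 * k%:~R = 0.
  have nz1 : ((k + k)%:~R : R[i]) != 0 by apply: nz; lia.
  by move/eqP: k1; rewrite mulf_eq0 (negbTE nz1) /= => /eqP.
have e2 : 8 * f 0 0 + 5 * (k + k)%:~R = 0.
  have nz1 : ((k + k + (k + k))%:~R : R[i]) != 0 by apply: nz; lia.
  by move/eqP: k2; rewrite mulf_eq0 (negbTE nz1) /= => /eqP.
have : ((k + k + k + k + k)%:~R : R[i]) = 0.
  apply: (lin2 (-1) 1 _ _ _ _ _ e1 e2); cast.
by apply/eqP; apply: nz; lia.
Qed.

Lemma step1 {R : realType} {f : int -> int -> R[i]} : left_symmetric f -> witt_commutator f ->
  forall k, f 0 k = k%:~R + f 0 0.
Proof.
move=> LS WC.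
have H := G LS WC (fun k => f 0 k - k%:~R = f 0 0).
have HQ : forall m j, f m j != 0 ->
    (f 0 (m + j) - (m + j)%:~R = f 0 0 <-> f 0 j - j%:~R = f 0 0).
  move=> m j hf.
  have e := Rv LS WC 0 m j m (m + j) j (m - 0)%:~R (f m j) (f 0 (m + j)) (f 0 j) (f m j) (f m j)
     ltac:(lia) erefl ltac:(lia) erefl erefl erefl erefl erefl erefl.
  have : f m j * (f 0 (m + j) - (f 0 j + m%:~R)) = 0.
    apply: (lin1 (-1) _ _ _ e); rewrite subr0; ring.
  move/eqP; rewrite mulf_eq0 (negbTE hf) /= subr_eq0 => /eqP ->.
  rewrite intrD; split => <-; ring.
have HQ0 : forall j, f 0 j - j%:~R = f 0 0 -> f 0 j = j%:~R + f 0 0.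
  by move=> j <-; ring.
have Q0 : f 0 0 - (0:int)%:~R = f 0 0 by rewrite subr0.
move=> k; have := H Q0 HQ0 HQ k; move=> <-; ring.
Qed.

Definition delta {R : realType} (j : int) (c : R[i]) : int -> R[i] :=
  fun k => if k == j then c else 0.

Lemma scale {R : realType} {f : int -> int -> R[i]} U : submodule f U ->
  forall a u, U u -> U (fun k => a * u k).
Proof.
case=> _ z cl _ a u Uu.
have := cl a u (fun _ => 0) Uu z.
have -> : (fun k => a * u k + 0) = (fun k => a * u k) => //.
by apply: functional_extensionality => k; rewrite addr0.
Qed.

Lemma grade_aux {R : realType} {f : int -> int -> R[i]} U : submodule f U ->
  (forall k, f 0 k = k%:~R + f 0 0) ->
  forall n v s, U v -> (size s <= n)%N -> (forall k, k \notin s -> v k = 0) ->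
  forall j, U (delta j (v j)).
Proof.
move=> S H1; have S' := S; case: S' => _ z cl lm.
elim=> [|n IH] v s Uv Hs Hv j;
  (case: (classic (exists k, k != j /\ v k != 0)) => [[k [kj vk]]|Hno];
  [ have ks : k \in s by case: (boolP (k \in s)) => // /Hv vk0; rewrite vk0 eqxx in vk
  | have -> : delta j (v j) = v => //;
    apply: functional_extensionality => i; rewrite /delta;
    case: eqP => [->//|/eqP ij]; case: (eqVneq (v i) 0) => // vi;
    by exfalso; apply: Hno; exists i ]).
- by move: Hs; rewrite leqn0 => /nilP sn; rewrite sn in ks.
pose w := fun i => - f 0 k * v i + lmul f 0 v i.
have Uw : U w by apply: cl => //; apply: lm.
have wj : forall i, w i = (i - k)%:~R * v i.
  by move=> i; rewrite /w /lmul subr0 (H1 i) (H1 k) intrB; ring.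
have Hs' : (size (filter (predC1 k) s) <= n)%N.
  rewrite size_filter.
  have := count_predC (predC1 k) s.
  have : (0 < count (predC (predC1 k)) s)%N.
    by rewrite -has_count; apply/hasP; exists k => //=; rewrite eqxx.
  lia.
have Hw : forall i, i \notin filter (predC1 k) s -> w i = 0.
  move=> i; rewrite mem_filter negb_and /= negbK => /orP [/eqP -> | /Hv vi].
    by rewrite wj subrr mul0r.
  by rewrite wj vi mulr0.
have := IH w (filter (predC1 k) s) Uw Hs' Hw j.
have wjv : w j = (j - k)%:~R * v j := wj j.
have nzc : ((j - k)%:~R : R[i]) != 0 by rewrite intr_eq0 subr_eq0 eq_sym.
move/(scale U S ((j - k)%:~R)^-1) => Us.
have E : (fun k0 => ((j - k)%:~R)^-1 * delta j (w j) k0) = delta j (v j).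
  apply: functional_extensionality => i; rewrite /delta; case: eqP => _.
    by rewrite wjv mulrA mulVf ?mul1r.
  by rewrite mulr0.
by rewrite -E.
Qed.

Lemma grade {R : realType} {f : int -> int -> R[i]} U : submodule f U ->
  (forall k, f 0 k = k%:~R + f 0 0) ->
  forall v, U v -> forall j, U (delta j (v j)).
Proof.
move=> S H1 v Uv j; have S' := S; case: S' => fs _ _ _.
have [s Hs] := fs v Uv.
exact: (grade_aux U S H1 (size s) v s Uv (leqnn _) Hs j).
Qed.

Lemma span {R : realType} {f : int -> int -> R[i]} U : submodule f U ->
  (forall k, U (delta k 1)) -> forall v, finsupp 0 v -> U v.
Proof.
case=> _ z cl _ Hd v [s]; elim: s v => [|t s IH] v Hv.
  have -> : v = (fun _ => 0) => //.
  by apply: functional_extensionality => n; apply: Hv.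
pose v' := fun i => if i == t then 0 else v i.
have Uv' : U v'.
  apply: IH => n ns; rewrite /v'; case: eqP => // /eqP nt.
  by apply: Hv; rewrite inE negb_or nt.
have := cl (v t) _ _ (Hd t) Uv'.
have -> : (fun k => v t * delta t 1 k + v' k) = v => //.
apply: functional_extensionality => i; rewrite /v' /delta; case: eqP => [->|_].
  by rewrite mulr1 addr0.
by rewrite mulr0 add0r.
Qed.

Lemma moveU {R : realType} {f : int -> int -> R[i]} U : submodule f U ->
  forall m j, U (delta j 1) -> f m j != 0 -> U (delta (m + j) 1).
Proof.
move=> S m j Uj hf; have S' := S; case: S' => _ _ _ lm.
have := scale U S (f m j)^-1 _ (lm m _ Uj).
have -> : (fun k => (f m j)^-1 * lmul f m (delta j 1) k) = delta (m + j) 1 => //.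
apply: functional_extensionality => i; rewrite /lmul /delta.
have -> : (i - m == j) = (i == m + j) by rewrite subr_eq addrC.
case: eqP => [->|_]; last by rewrite !mulr0.
have -> : m + j - m = j by rewrite addrC addKr.
by rewrite mulr1 mulVf.
Qed.

Theorem lemma3p3 (R : realType) (f : int -> int -> R[i]) :
  left_symmetric f -> witt_commutator f -> indecomposable f.
Proof.
move=> LS WC [U1 [U2 [S1 S2 [w1 [fw1 nw1]] [w2 [fw2 nw2]] [D0 D1]]]].
have H1 := step1 LS WC.
have G1 := grade U1 S1 H1; have G2 := grade U2 S2 H1.
have notboth : forall j, U1 (delta j 1) -> U2 (delta j 1) -> False.
  move=> j u1 u2; have := congr1 (fun g => g j) (D0 _ u1 u2).
  by rewrite /delta eqxx /= => /eqP; rewrite oner_eq0.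
have either : forall j, U1 (delta j 1) \/ U2 (delta j 1).
  move=> j.
  have fd : finsupp 0 (delta j (1 : R[i])).
    by exists [:: j] => n; rewrite inE /delta => /negbTE ->.
  have [v1 [v2 [u1 u2 e]]] := D1 _ fd.
  have ej : 1 = v1 j + v2 j.
    by have := congr1 (fun g => g j) e; rewrite /delta eqxx.
  case: (eqVneq (v1 j) 0) => [v10|v1nz].
    right; have := G2 _ u2 j; rewrite -(_ : 1 = v2 j) //.
    by rewrite ej v10 add0r.
  left; have := scale U1 S1 (v1 j)^-1 _ (G1 _ u1 j).
  have -> : (fun k => (v1 j)^-1 * delta j (v1 j) k) = delta j 1 => //.
  apply: functional_extensionality => i; rewrite /delta; case: eqP => _.
    by rewrite mulVf.
  by rewrite mulr0.
have HQ : forall m j, f m j != 0 ->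
    ((U1 (delta (m + j) 1) <-> U1 (delta 0 1)) <-> (U1 (delta j 1) <-> U1 (delta 0 1))).
  move=> m j hf.
  suff : U1 (delta (m + j) 1) <-> U1 (delta j 1) by tauto.
  split => [h|h]; last exact: moveU U1 S1 _ _ h hf.
  case: (either j) => // h2.
  by exfalso; apply: (notboth (m + j)) => //; apply: moveU U2 S2 _ _ h2 hf.
have HQ0 : forall j, (U1 (delta j 1) <-> U1 (delta 0 1)) -> f 0 j = j%:~R + f 0 0.
  by move=> j _; apply: H1.
have all := G LS WC (fun j => U1 (delta j 1) <-> U1 (delta 0 1)) ltac:(tauto) HQ0 HQ.
case: (classic (U1 (delta 0 1))) => h0.
  apply: nw1; apply: (span U1 S1) => // k; exact: (proj2 (all k) h0).
apply: nw2; apply: (span U2 S2) => // k.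
case: (either k) => // h; exfalso; apply: h0; exact: (proj1 (all k) h).
Qed.
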